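(* For every $n\geq 1$, $$\sum_{T\in \mathcal P_{n,0}}x^{\mathrm{young}_T(1)}\,t^{\mathrm{eld}(T)}=\prod_{k=0}^{n-2}(x+k+kt).$$ In particular, the number of increasing (non-plane) rooted trees on $[n]$ is $(n-1)!$ and the number of increasing plane trees on $[n]$ is $(2n-3)!!$.
   Context: All trees are rooted trees whose vertices are labeled by distinct positive integers. A vertex $j$ is a descendant of $i$ if the path from the root to $j$ passes through $i$ (every vertex is a descendant of itself); $\beta_T(i)$ is the smallest descendant of $i$. If $j$ is a descendant of $i$ joined to $i$ by an edge, $j$ is a child of $i$ and the edge is written $(i,j)$; children of the same vertex are brothers. A plane tree is a rooted tree in which the children of each vertex are linearly ordered (left to right). In a plane tree $T$, a vertex $j$ is elder if it has a brother $k$ to its right with $\beta_T(k)<\beta_T(j)$. $\mathrm{eld}_T(v)$ is the number of elder children of $v$, $\mathrm{eld}(T)$ the total number of elder vertices, $\deg_T(v)$ the number of children of $v$, and $\mathrm{young}_T(v)=\deg_T(v)-\mathrm{eld}_T(v)$. An edge $(i,j)$ is proper if $j$ is an elder child of $i$ or $i<\beta_T(j)$; otherwise improper. $\mathcal P_{n,0}$ is the set of plane trees on $[n]=\{1,\dots,n\}$ (any root) with no improper edges. A (plane) tree on $[n]$ is increasing if the labels along every path from the root to another vertex form an increasing sequence. Here $(2n-3)!!=1\cdot3\cdots(2n-3)$, equal to $1$ when $n=1$. *)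

(* Defs.v *)
From HB Require Import structures.
From mathcomp Require Import all_boot all_order all_algebra.
Set Implicit Arguments. Unset Strict Implicit. Unset Printing Implicit Defensive.

(* A node carries its label and the left-to-right ordered list of the
   subtrees rooted at its children. *)
Inductive ptree := PNode of nat & seq ptree.

Definition plabel (t : ptree) : nat := let: PNode a _ := t in a.
Definition pkids (t : ptree) : seq ptree := let: PNode _ ts := t in ts.

Fixpoint ptree_enc (t : ptree) : GenTree.tree nat :=
  let: PNode a ts := t in GenTree.Node a (map ptree_enc ts).
Fixpoint ptree_dec (g : GenTree.tree nat) : ptree :=
  match g with
  | GenTree.Leaf _ => PNode 0 [::]
  | GenTree.Node a gs => PNode a (map ptree_dec gs)
  end.

Lemma ptree_encK_aux : forall t, ptree_dec (ptree_enc t) = t.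
Proof.
fix IH 1; case=> a ts /=; congr PNode.
elim: ts => //= u us IHus; by rewrite IH IHus.
Qed.
Lemma ptree_encK : cancel ptree_enc ptree_dec.
Proof. exact: ptree_encK_aux. Qed.

HB.instance Definition _ := Countable.copy ptree (can_type ptree_encK).

Fixpoint labels (t : ptree) : seq nat :=
  let: PNode a ts := t in a :: flatten (map labels ts).

(* all subtrees; the subtree rooted at vertex v represents v *)
Fixpoint subtrees (t : ptree) : seq ptree :=
  let: PNode _ ts := t in t :: flatten (map subtrees ts).

Definition plane_tree_on (n : nat) (t : ptree) : bool :=
  perm_eq (labels t) (iota 1 n).

Definition beta (t : ptree) : nat := foldr minn (plabel t) (labels t).

Definition pdef : ptree := PNode 0 [::].

(* the i-th child (0-based, left to right) among the children ts is elder: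
   it has a brother to its right with a smaller beta *)
Definition elder (ts : seq ptree) (i : nat) : bool :=
  has (fun j => (i < j) && (beta (nth pdef ts j) < beta (nth pdef ts i)))
      (iota 0 (size ts)).

Definition eld_node (u : ptree) : nat :=
  count (elder (pkids u)) (iota 0 (size (pkids u))).
Definition deg_node (u : ptree) : nat := size (pkids u).
Definition young_node (u : ptree) : nat := deg_node u - eld_node u.

Definition eld (t : ptree) : nat := sumn (map eld_node (subtrees t)).

(* young_T(v) for the vertex labelled v (labels are distinct) *)
Definition young_at (v : nat) (t : ptree) : nat :=
  sumn [seq young_node u | u <- subtrees t & plabel u == v].

Definition proper_edge (u : ptree) (i : nat) : bool :=
  elder (pkids u) i || (plabel u < beta (nth pdef (pkids u) i)).

Definition no_improper (t : ptree) : bool :=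
  all (fun u => all (proper_edge u) (iota 0 (size (pkids u)))) (subtrees t).

(* increasing plane tree: labels increase along every root-to-vertex path,
   i.e. along every edge (parent, child) *)
Definition increasing_ptree (t : ptree) : bool :=
  all (fun u => all (fun c => plabel u < plabel c) (pkids u)) (subtrees t).

(* Vertex i : 'I_n stands for the label i+1.  p i = None iff i is the root,
   p i = Some j iff j is the parent of i. *)
Definition rooted_tree (n : nat) (p : {ffun 'I_n -> option 'I_n}) : bool :=
  (#|[set i | p i == None]| == 1)
  && [forall i, exists k : 'I_n.+1, iter k (fun o => obind p o) (Some i) == None].

Definition increasing_rtree (n : nat) (p : {ffun 'I_n -> option 'I_n}) : bool :=
  [forall i, if p i is Some j then j < i else true].

Fixpoint dfact (m : nat) : nat :=
  match m with
  | 0 | 1 => 1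
  | (k.+2) as m' => m' * dfact k
  end.

(* Main.v *)
Require Import Defs.
From HB Require Import structures.
From mathcomp Require Import all_boot all_order all_algebra.
From mathcomp Require Import zify ring.
Import GRing.Theory.
Set Implicit Arguments. Unset Strict Implicit. Unset Printing Implicit Defensive.

Lemma ptree_ind' (P : ptree -> Prop) :
  (forall a ts, (forall c, c \in ts -> P c) -> P (PNode a ts)) -> forall t, P t.
Proof.
move=> H; fix IH 1; case=> a ts; apply: H.
elim: ts => [|u us IHus] c; first (rewrite in_nil => F; discriminate F).
rewrite inE => /orP [/eqP -> | Hc]; [exact: IH | exact: IHus].
Qed.

Definition gs (f : ptree -> nat) (t : ptree) := sumn (map f (subtrees t)).

Lemma sumn_map_flatten (T : Type) (f : T -> nat) ss :
  sumn (map f (flatten ss)) = sumn (map (fun s => sumn (map f s)) ss).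
Proof. by elim: ss => //= s ss IH; rewrite map_cat sumn_cat IH. Qed.

Lemma gs_rec f a ts : gs f (PNode a ts) = f (PNode a ts) + sumn (map (gs f) ts).
Proof. by rewrite /gs /= sumn_map_flatten -map_comp. Qed.

Lemma labels_sub t : map plabel (subtrees t) = labels t.
Proof.
elim/ptree_ind': t => a ts IH /=; congr (_ :: _).
rewrite map_flatten -map_comp; congr flatten; exact/eq_in_map.
Qed.

Lemma sumnD (T : Type) (f g : T -> nat) s :
  sumn (map (fun x => f x + g x) s) = sumn (map f s) + sumn (map g s).
Proof. by elim: s => //= x s ->; rewrite !addnA [f x + _ + _]addnAC. Qed.

Lemma sumnM (T : Type) k (f : T -> nat) s :
  sumn (map (fun x => k * f x) s) = k * sumn (map f s).
Proof. by elim: s => [|x s IH] /=; rewrite ?muln0 // IH mulnDr. Qed.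

Lemma sumn_eq_in (T : eqType) (f g : T -> nat) s :
  {in s, f =1 g} -> sumn (map f s) = sumn (map g s).
Proof. by move/eq_in_map ->. Qed.

Lemma gsD f g t : gs (fun u => f u + g u) t = gs f t + gs g t.
Proof. exact: sumnD. Qed.

Lemma gs_eq_in f g t : {in subtrees t, f =1 g} -> gs f t = gs g t.
Proof. exact: sumn_eq_in. Qed.

Lemma sumn_filter (T : Type) (P : pred T) (f : T -> nat) s :
  sumn [seq f u | u <- s & P u] = sumn (map (fun u => P u * f u) s).
Proof. by elim: s => //= x s IH; case: (P x) => /=; rewrite IH ?mul1n ?mul0n. Qed.

Lemma all_sumn (T : Type) (P : pred T) s :
  all P s = (sumn (map (fun u => nat_of_bool (~~ P u)) s) == 0).
Proof. by elim: s => //= x s ->; case: (P x). Qed.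

Lemma eld_gs t : eld t = gs eld_node t.
Proof. by []. Qed.

Lemma young_gs v t : young_at v t = gs (fun u => (plabel u == v) * young_node u) t.
Proof. by rewrite /young_at sumn_filter. Qed.

Lemma noimp_gs t : no_improper t =
  (gs (fun u => nat_of_bool (~~ all (proper_edge u) (iota 0 (size (pkids u))))) t == 0).
Proof. by rewrite /no_improper all_sumn. Qed.

Lemma incr_gs t : increasing_ptree t =
  (gs (fun u => nat_of_bool (~~ all (fun c => plabel u < plabel c) (pkids u))) t == 0).
Proof. by rewrite /increasing_ptree all_sumn. Qed.

Lemma sub_self t : t \in subtrees t.
Proof. by case: t => a ts; rewrite /= inE eqxx. Qed.

Lemma sub_sub t u : u \in subtrees t -> {subset subtrees u <= subtrees t}.
Proof.
elim/ptree_ind': t u => a ts IH u /=; rewrite inE => /orP [/eqP -> //| ].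
move=> /flatten_mapP [c cin uin] w wu; rewrite inE; apply/orP; right.
apply/flatten_mapP; exists c => //; exact: IH wu.
Qed.

Lemma kid_sub u c : c \in pkids u -> c \in subtrees u.
Proof.
case: u => a ts /= cin; rewrite inE; apply/orP; right.
apply/flatten_mapP; exists c => //; exact: sub_self.
Qed.

Lemma sub_label t u : u \in subtrees t -> plabel u \in labels t.
Proof. by move=> H; rewrite -labels_sub; apply: map_f. Qed.

Lemma labels_subset t u : u \in subtrees t -> {subset labels u <= labels t}.
Proof.
move=> H x; rewrite -!labels_sub => /mapP [w wu ->].
apply: map_f; exact: sub_sub wu.
Qed.

Lemma leq_foldr_minn y x s :
  (y <= foldr minn x s) = (y <= x) && all (fun z => y <= z) s.
Proof.
elim: s => /= [|z s IH]; first by rewrite andbT.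
by rewrite leq_min IH andbCA.
Qed.

Lemma leq_beta y t : (y <= beta t) = all (fun z => y <= z) (labels t).
Proof. by case: t => a ts; rewrite /beta /= leq_min leq_foldr_minn andbA andbb. Qed.

Lemma beta_le_plabel t : beta t <= plabel t.
Proof.
have := leq_beta (beta t) t; rewrite leqnn; case: t => a ts /=.
by move/esym/andP => [].
Qed.

Lemma beta_eq t1 t2 :
  (forall y, all (fun z => y <= z) (labels t1) = all (fun z => y <= z) (labels t2)) ->
  beta t1 = beta t2.
Proof.
move=> H; apply/anti_leq/andP; split.
  by rewrite leq_beta -H -leq_beta.
by rewrite leq_beta H -leq_beta.
Qed.

Definition leaf m := PNode m [::].

Fixpoint ins (v i m : nat) (t : ptree) {struct t} : ptree :=
  let: PNode a ts := t in
  let ts' := map (ins v i m) ts in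
  PNode a (if a == v then take i ts' ++ leaf m :: drop i ts' else ts').

Lemma plabel_ins v i m t : plabel (ins v i m t) = plabel t.
Proof. by case: t. Qed.

Lemma sumn_ins (T : Type) (f : T -> nat) i x s :
  sumn (map f (take i s ++ x :: drop i s)) = f x + sumn (map f s).
Proof.
rewrite map_cat sumn_cat /= addnCA -sumn_cat -map_cat cat_take_drop //.
Qed.

Lemma count_labels_ins v i m (p : pred nat) t :
  count p (labels (ins v i m t)) = count p (labels t) + p m * count_mem v (labels t).
Proof.
elim/ptree_ind': t => a ts IH.
have E : sumn [seq count p (labels c) | c <- map (ins v i m) ts] =
   sumn [seq count p (labels c) | c <- ts] + p m * sumn [seq count_mem v (labels c) | c <- ts].
  rewrite -map_comp (sumn_eq_in (g := fun c => count p (labels c) + p m * count_mem v (labels c))).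
    by rewrite sumnD sumnM.
  by move=> c cin /=; rewrite IH.
rewrite /= !count_flatten -!map_comp.
case: eqP => [->|ne] /=.
  rewrite sumn_ins /= E /comp /=. lia.
rewrite /comp /= E /=. lia.
Qed.

Lemma all_count0 (T : Type) (q : pred T) s : all q s = (count (predC q) s == 0).
Proof. by elim: s => //= x s ->; case: (q x). Qed.

Lemma beta_ins v i m t : all (fun z => z < m) (labels t) -> beta (ins v i m t) = beta t.
Proof.
move=> Hm; apply: beta_eq => y.
rewrite !all_count0 count_labels_ins.
case E: (count _ (labels t)) => [|c] /=; last by [].
have : all (fun z => y <= z) (labels t) by rewrite all_count0 E.
case: t Hm {E} => a ts /= /andP [am _] /andP [ya _].
by rewrite (leq_trans ya (ltnW am)).
Qed.

Lemma all_labels_kid (P : pred nat) a ts c :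
  all P (labels (PNode a ts)) -> c \in ts -> all P (labels c).
Proof.
move=> /= /andP [_ H] cin; apply/allP => z zin; apply: (allP H).
by apply/flatten_mapP; exists c.
Qed.

Lemma all_labels_sub (P : pred nat) t u :
  all P (labels t) -> u \in subtrees t -> all P (labels u).
Proof. by move=> H us; apply/allP => z /(labels_subset us) /(allP H). Qed.

Fixpoint eldl (bs : seq nat) : nat :=
  if bs is b :: bs' then has (fun c => c < b) bs' + eldl bs' else 0.
Fixpoint properl (a : nat) (bs : seq nat) : bool :=
  if bs is b :: bs' then (has (fun c => c < b) bs' || (a < b)) && properl a bs' else true.

Lemma iotaSmap m n : iota m.+1 n = map S (iota m n).
Proof. by elim: n m => //= n IH m; rewrite IH. Qed.

Lemma elder0 t ts : elder (t :: ts) 0 = has (fun c => beta c < beta t) ts.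
Proof.
rewrite /elder /= iotaSmap has_map.
rewrite -[in RHS](mkseq_nth pdef ts) /mkseq has_map.
by apply: eq_has => k.
Qed.

Lemma elderS t ts j : elder (t :: ts) j.+1 = elder ts j.
Proof.
rewrite /elder /= iotaSmap has_map /=.
by apply: eq_has => k /=; rewrite ltnS.
Qed.

Lemma eld_node_l u : eld_node u = eldl (map beta (pkids u)).
Proof.
case: u => a ts; rewrite /eld_node /=.
elim: ts => //= t ts IH.
rewrite iotaSmap count_map elder0 has_map -IH.
congr (_ + _); apply: eq_count => k /=; exact: elderS.
Qed.

Lemma proper_l u : all (proper_edge u) (iota 0 (size (pkids u))) =
  properl (plabel u) (map beta (pkids u)).
Proof.
case: u => a ts; rewrite /proper_edge /=.
elim: ts => //= t ts IH.
rewrite iotaSmap all_map elder0 has_map -IH.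
congr (_ && _); apply: eq_all => k /=; by rewrite elderS.
Qed.

Lemma eldl_ins M i bs : all (fun b => b < M) bs ->
  eldl (take i bs ++ M :: drop i bs) = eldl bs + (i < size bs).
Proof.
elim: bs i => [|b bs IH] [|i] //=.
- move=> /andP [bM H].
  by rewrite bM /= addnC.
- move=> /andP [bM H]; rewrite IH // has_cat /= ltnNge (ltnW bM) /=.
  rewrite -has_cat cat_take_drop. lia.
Qed.

Lemma properl_ins a M i bs : a < M -> all (fun b => b < M) bs ->
  properl a (take i bs ++ M :: drop i bs) = properl a bs.
Proof.
move=> aM; elim: bs i => [|b bs IH] [|i] //=.
- by rewrite aM.
- by rewrite aM.
- by case/andP => -> _.
- move=> /andP [bM H]; rewrite IH // has_cat /= ltnNge (ltnW bM) /=.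
  by rewrite -has_cat cat_take_drop.
Qed.

Lemma eldl_le bs : eldl bs <= size bs.
Proof. elim: bs => //= b bs IH; case: has => /=; lia. Qed.

Definition local (f : ptree -> nat) := forall a ts ts2,
  map beta ts = map beta ts2 -> map plabel ts = map plabel ts2 ->
  f (PNode a ts) = f (PNode a ts2).

Definition loc v i m u :=
  let: PNode a ts := u in PNode a (if a == v then take i ts ++ leaf m :: drop i ts else ts).

Lemma gs_ins f v i m t : local f -> all (fun z => z < m) (labels t) ->
  gs f (ins v i m t) = gs (fun u => f (loc v i m u)) t + count_mem v (labels t) * f (leaf m).
Proof.
move=> Hf; elim/ptree_ind': t => a ts IH Hm.
have bts : map beta (map (ins v i m) ts) = map beta ts.
  rewrite -map_comp; apply/eq_in_map => c cin /=; apply: beta_ins.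
  exact: all_labels_kid Hm cin.
have pts : map plabel (map (ins v i m) ts) = map plabel ts.
  by rewrite -map_comp; apply/eq_map => c /=; rewrite plabel_ins.
have IHs : sumn (map (gs f) (map (ins v i m) ts)) =
   sumn (map (gs (fun u => f (loc v i m u))) ts) +
   sumn [seq count_mem v (labels c) | c <- ts] * f (leaf m).
  rewrite -map_comp (sumn_eq_in (g := fun c => gs (fun u => f (loc v i m u)) c +
       f (leaf m) * count_mem v (labels c))).
    by rewrite sumnD sumnM mulnC.
  move=> c cin /=; rewrite IH //; last exact: all_labels_kid Hm cin.
  by rewrite mulnC.
rewrite /= gs_rec gs_rec /= count_flatten -map_comp.
case: eqP => [->|ne] /=.
  rewrite sumn_ins IHs /comp /=.
  have -> : f (PNode v (take i (map (ins v i m) ts) ++ leaf m :: drop i (map (ins v i m) ts)))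
     = f (PNode v (take i ts ++ leaf m :: drop i ts)).
    by apply: Hf; rewrite !map_cat /= !map_take !map_drop ?bts ?pts.
  have -> : gs f (leaf m) = f (leaf m) by rewrite /gs /= addn0.
  set S := sumn [seq count_mem v (labels c) | c <- ts].
  set S2 := sumn (map (gs _) ts). rewrite mulnDl mul1n !addnA; congr (_ + _); rewrite addnAC. done.
rewrite IHs (Hf a _ ts) //.
set S := sumn [seq count_mem v (labels c) | c <- ts].
rewrite add0n addnA; congr (_ + _).
Qed.

Lemma sub_lt m t u : all (fun z => z < m) (labels t) -> u \in subtrees t -> plabel u < m.
Proof. by move=> H uin; apply: (allP H); apply: sub_label. Qed.

Lemma kids_lt m t u : all (fun z => z < m) (labels t) -> u \in subtrees t ->
  all (fun b => b < m) (map beta (pkids u)).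
Proof.
move=> H uin; rewrite all_map; apply/allP => c cin /=.
apply: leq_ltn_trans (beta_le_plabel c) _; apply: (sub_lt H).
exact: sub_sub uin _ (kid_sub cin).
Qed.

Lemma size_ins_l (T : Type) i (x : T) s : size (take i s ++ x :: drop i s) = (size s).+1.
Proof. by rewrite size_cat /= addnS -size_cat cat_take_drop. Qed.

Lemma eld_ins v i m t : all (fun z => z < m) (labels t) ->
  eld (ins v i m t) = eld t + gs (fun u => (plabel u == v) * (i < deg_node u)) t.
Proof.
move=> Hm; rewrite !eld_gs gs_ins //; last first.
  by move=> a ts ts2 Hb _; rewrite !eld_node_l /= Hb.
have -> : eld_node (leaf m) = 0 by [].
rewrite muln0 addn0 -gsD; apply: gs_eq_in => u uin.
have Hk := kids_lt Hm uin.
case: u uin Hk => a ts uin Hk /=; rewrite !eld_node_l /=.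
case: eqP => [-> | _] /=; last by rewrite mul0n addn0.
rewrite map_cat /= map_take map_drop eldl_ins ?size_map /=; first by case: (i < _).
by rewrite /beta /= minnn.
Qed.

Lemma young_ins v i m w t : all (fun z => z < m) (labels t) ->
  young_at w (ins v i m t) = young_at w t +
    gs (fun u => (plabel u == v) * ((plabel u == w) * (deg_node u <= i))) t.
Proof.
move=> Hm; rewrite !young_gs gs_ins //; last first.
  move=> a ts ts2 Hb _; rewrite /young_node /deg_node !eld_node_l /= Hb.
  by rewrite -(size_map beta ts) Hb size_map.
have -> : young_node (leaf m) = 0 by [].
rewrite !muln0 addn0 -gsD; apply: gs_eq_in => u uin.
have Hk := kids_lt Hm uin.
case: u uin Hk => a ts uin Hk /=; rewrite /young_node /deg_node !eld_node_l /=.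
case: (eqVneq a v) => [-> | ne] /=; last by rewrite mul0n addn0.
rewrite map_cat /= map_take map_drop eldl_ins ?size_map /=; last by rewrite /beta /= minnn.
rewrite size_ins_l.
have := eldl_le (map beta ts); rewrite size_map.
case: (v == w) => /=; last by rewrite !mul0n.
rewrite !mul1n leqNgt; case: ltnP => /= h; lia.
Qed.

Lemma noimp_ins v i m t : all (fun z => z < m) (labels t) ->
  no_improper (ins v i m t) = no_improper t.
Proof.
move=> Hm; rewrite !noimp_gs gs_ins //; last first.
  by move=> a ts ts2 Hb _; rewrite !proper_l /= Hb.
have -> : nat_of_bool (~~ all (proper_edge (leaf m)) (iota 0 (size (pkids (leaf m))))) = 0 by [].
rewrite muln0 addn0; congr (_ == 0); apply: gs_eq_in => u uin.
have Hk := kids_lt Hm uin; have Hu := sub_lt Hm uin.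
case: u uin Hk Hu => a ts uin Hk Hu /=; rewrite !proper_l /=.
case: eqP => [E | _] //=; subst v.
rewrite map_cat /= map_take map_drop properl_ins //; rewrite /beta /= minnn //.
Qed.

Lemma all_plabel a ts : all (fun c => a < plabel c) ts = all (fun z => a < z) (map plabel ts).
Proof. by rewrite all_map. Qed.

Lemma incr_ins v i m t : all (fun z => z < m) (labels t) ->
  increasing_ptree (ins v i m t) = increasing_ptree t.
Proof.
move=> Hm; rewrite !incr_gs gs_ins //; last first.
  by move=> a ts ts2 _ Hp; rewrite /= !all_plabel Hp.
have -> : nat_of_bool (~~ all (fun c => plabel (leaf m) < plabel c) (pkids (leaf m))) = 0 by [].
rewrite muln0 addn0; congr (_ == 0); apply: gs_eq_in => u uin.
have Hu := sub_lt Hm uin.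
case: u uin Hu => a ts uin Hu /=.
case: eqP => [E | _] //=; subst v.
by rewrite all_cat /= Hu andbCA /= -all_cat cat_take_drop.
Qed.

Fixpoint remove (m : nat) (t : ptree) {struct t} : ptree :=
  let: PNode a ts := t in
  PNode a (flatten (map (fun c => if plabel c == m then [::] else [:: remove m c]) ts)).

Lemma flatten_map1 (T : eqType) (g : T -> seq T) s :
  {in s, forall c, g c = [:: c]} -> flatten (map g s) = s.
Proof.
elim: s => //= x s IH H; rewrite H ?mem_head //= IH // => c cin.
by apply: H; rewrite inE cin orbT.
Qed.

Lemma remove_id m t : m \notin labels t -> remove m t = t.
Proof.
elim/ptree_ind': t => a ts IH /=; rewrite inE negb_or => /andP [_ H].
congr PNode; apply: flatten_map1 => c cin.
have Hc : m \notin labels c.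
  apply: contra H => mc; by apply/flatten_mapP; exists c.
have -> : (plabel c == m) = false.
  apply/negbTE; apply: contra Hc => /eqP <-; case: (c) => ? ? /=; exact: mem_head.
by rewrite IH.
Qed.

Lemma ins_id v i m t : v \notin labels t -> ins v i m t = t.
Proof.
elim/ptree_ind': t => a ts IH /=; rewrite inE negb_or => /andP [av H].
rewrite eq_sym (negbTE av); congr PNode; apply: map_id_in => c cin.
apply: IH => //; apply: contra H => mc; by apply/flatten_mapP; exists c.
Qed.

Lemma remove_ins v i m t : m \notin labels t -> remove m (ins v i m t) = t.
Proof.
elim/ptree_ind': t => a ts IH /=; rewrite inE negb_or => /andP [am H].
have G : {in ts, forall c, (fun c => if plabel c == m then [::] else [:: remove m c]) (ins v i m c) = [:: c]}.
  move=> c cin /=.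
  have Hc : m \notin labels c.
    apply: contra H => mc; by apply/flatten_mapP; exists c.
  have -> : (plabel (ins v i m c) == m) = false.
    rewrite plabel_ins; apply/negbTE; apply: contra Hc => /eqP <-; case: (c) => ? ? /=; exact: mem_head.
  by rewrite IH.
congr PNode; case: (a == v).
  rewrite map_cat flatten_cat /= eqxx /= -flatten_cat -map_cat cat_take_drop.
  by rewrite -map_comp; apply: flatten_map1.
by rewrite -map_comp; apply: flatten_map1.
Qed.

Lemma in_kid_labels c ts x : c \in ts -> x \in labels c -> x \in flatten (map labels ts).
Proof. by move=> cin xin; apply/flatten_mapP; exists c. Qed.

Lemma common_kid ts c1 c2 x : uniq (flatten (map labels ts)) -> c1 \in ts -> c2 \in ts ->
  x \in labels c1 -> x \in labels c2 -> c1 = c2.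
Proof.
elim: ts => //= d ds IH; rewrite cat_uniq => /and3P [_ Hd Hds].
rewrite !inE => /orP [/eqP -> | c1in] /orP [/eqP -> | c2in] // x1 x2.
- case/negP: Hd; apply/hasP; exists x => //; exact: in_kid_labels c2in x2.
- case/negP: Hd; apply/hasP; exists x => //; exact: in_kid_labels c1in x1.
- exact: IH x1 x2.
Qed.

Lemma uniq_kid ts c : uniq (flatten (map labels ts)) -> c \in ts -> uniq (labels c).
Proof.
elim: ts => //= d ds IH; rewrite cat_uniq => /and3P [Hd _ Hds].
by rewrite inE => /orP [/eqP -> | cin] //; apply: IH.
Qed.

Definition valid t v i := exists2 u, u \in subtrees t & (plabel u = v /\ i <= deg_node u).

Lemma valid_label t v i : valid t v i -> v \in labels t.
Proof. by case=> u uin [<- _]; exact: sub_label. Qed.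

Lemma valid_split a ts v i : uniq (labels (PNode a ts)) -> valid (PNode a ts) v i ->
  (v = a /\ i <= size ts) \/ (v != a /\ exists2 c, c \in ts & valid c v i).
Proof.
move=> /= /andP [aF _] [u uin [pu iu]]; move: uin; rewrite /= inE => /orP [/eqP E | ].
  by left; subst u.
move/flatten_mapP => [c cin uc]; right; split.
  apply/eqP => E; subst v; case/negP: aF; apply: in_kid_labels cin _.
  by rewrite -E; apply: sub_label.
by exists c => //; exists u.
Qed.

Lemma size_labels_ins v i m t :
  size (labels (ins v i m t)) = size (labels t) + count_mem v (labels t).
Proof. by rewrite -!count_predT count_labels_ins mul1n. Qed.

Lemma ins_inj m t : uniq (labels t) -> m \notin labels t -> forall v i v' i',
  valid t v i -> valid t v' i' -> ins v i m t = ins v' i' m t -> (v, i) = (v', i').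
Proof.
elim/ptree_ind': t => a ts IH Hu Hm v i v' i' V V' E.
have Hu' := Hu; move: Hu' => /= /andP [aF uF].
have kids_id : forall w j, w \notin flatten (map labels ts) -> map (ins w j m) ts = ts.
  move=> w j wF; apply: map_id_in => c cin; apply: ins_id.
  by apply: contra wF; apply: in_kid_labels.
have nl : leaf m \notin ts.
  apply/negP => lin; move: Hm; rewrite /= inE negb_or => /andP [_ /negP]; apply.
  by apply: in_kid_labels lin _; rewrite /= inE.
case: (valid_split Hu V) => [[ev iv] | [nv [c cin Vc]]];
  case: (valid_split Hu V') => [[ev' iv'] | [nv' [c' cin' Vc']]].
- subst v v'; move: E; rewrite /= eqxx !kids_id //; case=> E.
  have := congr1 (index (leaf m)) E; rewrite !index_cat.
  have nt : forall j, leaf m \notin take j ts by move=> j; apply: contra nl; apply: mem_take.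
  rewrite (negbTE (nt i)) (negbTE (nt i')) /= eqxx !addn0 !size_takel // => ->.
  by [].
- subst v; move: E; rewrite /= eqxx eq_sym (negbTE nv').
  move=> E; have := congr1 (fun t => size (pkids t)) E; rewrite /= size_ins_l !size_map.
  move=> H; exfalso; lia.
- subst v'; move: E; rewrite /= eqxx eq_sym (negbTE nv).
  move=> E; have := congr1 (fun t => size (pkids t)) E; rewrite /= size_ins_l !size_map.
  move=> H; exfalso; lia.
- move: E; rewrite /= eq_sym (negbTE nv) eq_sym (negbTE nv'); case=> E.
  have Ec : ins v i m c = ins v' i' m c by move/eq_in_map: E => /(_ c cin).
  have Huc : uniq (labels c) by apply: uniq_kid uF cin.
  have Hmc : m \notin labels c.
    apply: contra Hm => mc; rewrite /= inE; apply/orP; right; exact: in_kid_labels cin mc.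
  case: (boolP (v' \in labels c)) => vc.
    have cc : c' = c by apply: common_kid uF cin' cin (valid_label Vc') vc.
    subst c'; exact: IH Huc Hmc _ _ _ _ Vc Vc' Ec.
  rewrite (ins_id _ _ vc) in Ec.
  have := congr1 (fun t => size (labels t)) Ec; rewrite /= size_labels_ins.
  have : count_mem v (labels c) != 0.
    by apply/negP => /eqP/count_memPn; rewrite (valid_label Vc).
  lia.
Qed.

Definition slots t :=
  flatten [seq [seq (plabel u, j) | j <- iota 0 (deg_node u).+1] | u <- subtrees t].
Definition ins_all m t := [seq ins p.1 p.2 m t | p <- slots t].

Lemma slots_valid t p : p \in slots t -> valid t p.1 p.2.
Proof.
move/flatten_mapP => [u uin /mapP [j jin ->]]; exists u => //; split => //.
by move: jin; rewrite mem_iota add0n ltnS.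
Qed.

Lemma valid_slots t v i : valid t v i -> (v, i) \in slots t.
Proof.
case=> u uin [<- iu]; apply/flatten_mapP; exists u => //; apply: map_f.
by rewrite mem_iota add0n ltnS.
Qed.

Lemma uniq_flatten_map (S T : eqType) (g : S -> seq T) s :
  uniq s -> {in s, forall x, uniq (g x)} ->
  (forall x y z, x \in s -> y \in s -> z \in g x -> z \in g y -> x = y) ->
  uniq (flatten (map g s)).
Proof.
elim: s => //= x s IH /andP [xs us] Hg Hd; rewrite cat_uniq Hg ?mem_head //=.
apply/andP; split.
  apply/hasP => [[z /flatten_mapP [y yin zy] zx]].
  have yin' : y \in x :: s by rewrite inE yin orbT.
  have := Hd x y z (mem_head _ _) yin' zx zy.
  by move=> E; subst y; rewrite yin in xs.
apply: IH => //.
  by move=> y yin; apply: Hg; rewrite inE yin orbT.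
by move=> y1 y2 z y1in y2in; apply: Hd; rewrite inE ?y1in ?y2in orbT.
Qed.

Lemma uniq_map_inj (S T : eqType) (f : S -> T) s x y :
  uniq (map f s) -> x \in s -> y \in s -> f x = f y -> x = y.
Proof.
elim: s => //= w s IH /andP [ws us]; rewrite !inE => /orP [/eqP -> | xs] /orP [/eqP -> | ys] //.
- by move=> E; move: ws; rewrite E map_f.
- by move=> E; move: ws; rewrite -E map_f.
- exact: IH.
Qed.

Lemma uniq_slots t : uniq (labels t) -> uniq (slots t).
Proof.
move=> Hu; have Hs : uniq (map plabel (subtrees t)) by rewrite labels_sub.
apply: uniq_flatten_map.
- exact: map_uniq Hs.
- move=> u _; rewrite map_inj_uniq ?iota_uniq //; by move=> j1 j2 [].
- move=> u1 u2 z u1in u2in /mapP [j1 _ ->] /mapP [j2 _ [E _]].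
  exact: uniq_map_inj Hs u1in u2in E.
Qed.

Lemma uniq_ins_all m t : uniq (labels t) -> m \notin labels t -> uniq (ins_all m t).
Proof.
move=> Hu Hm; rewrite /ins_all map_inj_in_uniq ?uniq_slots //.
move=> [v i] [v' i'] pin qin E.
exact: ins_inj Hu Hm _ _ _ _ (slots_valid pin) (slots_valid qin) E.
Qed.

Lemma remove_ins_all m t T : m \notin labels t -> T \in ins_all m t -> remove m T = t.
Proof. by move=> Hm /mapP [p _ ->]; apply: remove_ins. Qed.

Lemma filter_single (s : seq ptree) u : uniq (map plabel s) -> u \in s ->
  [seq u' <- s | plabel u' == plabel u] = [:: u].
Proof.
elim: s => //= w s IH /andP [ws us]; rewrite inE => /orP [/eqP E | us'].
  subst w; rewrite eqxx; congr (_ :: _).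
  apply/eqP; rewrite -size_eq0 size_filter -(count_map plabel (pred1 (plabel u))).
  by apply/eqP/count_memPn.
have -> : (plabel w == plabel u) = false.
  by apply/negP => /eqP E; move: ws; rewrite E map_f.
exact: IH.
Qed.

Lemma gs_single t u (g : ptree -> nat) : uniq (labels t) -> u \in subtrees t ->
  gs (fun u' => (plabel u' == plabel u) * g u') t = g u.
Proof.
move=> Hu uin; rewrite /gs -sumn_filter filter_single ?labels_sub //=.
by rewrite addn0.
Qed.

Lemma remove_labels_sub m t : {subset labels (remove m t) <= labels t}.
Proof.
elim/ptree_ind': t => a ts IH x /=; rewrite !inE => /orP [-> // | ].
move/flatten_mapP => [d /flatten_mapP [c cin dc] xd]; apply/orP; right.
move: dc; case: (plabel c == m) => //; rewrite inE => /eqP E; subst d.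
by apply: in_kid_labels cin (IH c cin x xd).
Qed.

Definition leafm m t := all (fun u => (plabel u == m) ==> (pkids u == [::])) (subtrees t).

Lemma flatten_map_single (S T : eqType) (g : S -> seq T) (f : S -> T) s :
  {in s, forall c, g c = [:: f c]} -> flatten (map g s) = map f s.
Proof.
elim: s => //= x s IH H; rewrite H ?mem_head //= IH // => c cin.
by apply: H; rewrite inE cin orbT.
Qed.

Lemma plabel_in t : plabel t \in labels t.
Proof. by case: t => a ts; rewrite /= mem_head. Qed.

Lemma exists_slot m t : uniq (labels t) -> m \in labels t -> plabel t != m -> leafm m t ->
  exists2 p, p \in slots (remove m t) & t = ins p.1 p.2 m (remove m t).
Proof.
elim/ptree_ind': t => a ts IH Hu Hmin Ham Hleaf.
have /andP [aF uF] : (a \notin flatten (map labels ts)) && uniq (flatten (map labels ts)) := Hu.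
have Hmin' : m \in flatten (map labels ts).
  by move: Hmin; rewrite /= inE => /orP [/eqP E | //]; move: Ham; rewrite /= E eqxx.
case: (boolP (has (fun c => plabel c == m) ts)) => hm.
- set j := find (fun c => plabel c == m) ts.
  have jlt : j < size ts by rewrite -has_find.
  set c0 := nth pdef ts j.
  have c0m : plabel c0 == m by exact: (nth_find pdef hm).
  have c0in : c0 \in ts by apply: mem_nth.
  have c0l : c0 = leaf m.
    have : c0 \in subtrees (PNode a ts) by apply: kid_sub.
    move=> /(allP Hleaf) /=; rewrite c0m /=.
    by case: (c0) c0m => b [|? ?] //= /eqP ->.
  set A := take j ts; set B := drop j.+1 ts.
  have Ets : ts = A ++ leaf m :: B by rewrite -c0l /c0 /A /B -drop_nth // cat_take_drop.
  have nAB : forall c, c \in A ++ B -> m \notin labels c.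
    move=> c cin; apply/negP => mc.
    move: uF; rewrite Ets map_cat flatten_cat cat_uniq /= => /and3P [_ H1 H2].
    move: cin; rewrite mem_cat => /orP [cA | cB].
      by case/negP: H1; rewrite (in_kid_labels cA mc).
    by move: H2 => /andP [/negP H3 _]; apply: H3; apply: in_kid_labels cB mc.
  have Erem : remove m (PNode a ts) = PNode a (A ++ B).
    rewrite /= Ets map_cat flatten_cat /= eqxx /= -flatten_cat -map_cat.
    congr PNode; apply: flatten_map1 => c cin.
    have nc := nAB c cin.
    have -> : (plabel c == m) = false.
      by apply/negbTE; apply: contra nc => /eqP <-; apply: plabel_in.
    by rewrite remove_id.
  rewrite Erem; exists (a, size A).
    apply: valid_slots; exists (PNode a (A ++ B)); first exact: sub_self.
    by split => //; rewrite /deg_node /= size_cat leq_addr.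
  rewrite /= eqxx.
  have -> : map (ins a (size A) m) (A ++ B) = A ++ B.
    apply: map_id_in => c cin; apply: ins_id; apply: contra aF => ac.
    rewrite Ets map_cat flatten_cat mem_cat /=.
    move: cin; rewrite mem_cat => /orP [cA | cB].
      by rewrite (in_kid_labels cA ac).
    by rewrite inE (in_kid_labels cB ac) !orbT.
  by rewrite take_size_cat // drop_size_cat // -Ets.
- move: hm => /hasPn hm.
  move: Hmin' => /flatten_mapP [c cin mc].
  have Er : remove m (PNode a ts) = PNode a (map (remove m) ts).
    rewrite /=; congr PNode; apply: flatten_map_single => d din.
    by rewrite (negbTE (hm d din)).
  have Huc : uniq (labels c) by apply: uniq_kid uF cin.
  have Hlc : leafm m c.
    apply/allP => u uin; apply: (allP Hleaf); exact: (sub_sub (kid_sub (u:=PNode a ts) cin) uin).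
  have [[v i] pin Ec] := IH c cin Huc mc (hm c cin) Hlc.
  have V := slots_valid pin; simpl in V, Ec.
  have vc : v \in labels c by apply: remove_labels_sub; apply: valid_label V.
  rewrite Er; exists (v, i).
    apply: valid_slots; case: V => u uin Hu2; exists u => //.
    apply: sub_sub uin; apply: kid_sub; exact: map_f.
  rewrite /=.
  have -> : (a == v) = false.
    by apply/negbTE/eqP => E; subst v; case/negP: aF; apply: in_kid_labels cin vc.
  congr PNode; rewrite -map_comp; apply/esym/map_id_in => d din /=.
  case: (boolP (m \in labels d)) => md.
    by have E := common_kid uF din cin md mc; subst d.
  rewrite remove_id // ins_id //; apply/negP => vd.
  have E := common_kid uF din cin vd vc; subst d.
  by rewrite mc in md.
Qed.

Lemma properl_max a bs : properl a bs -> all (fun b => b <= a) bs -> bs = [::].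
Proof.
elim: bs => //= b bs IH /andP [H1 H2] /andP [ba H3].
have E := IH H2 H3; subst bs; move: H1 => /=.
by rewrite ltnNge ba.
Qed.

Lemma leafm_noimp m t : no_improper t -> all (fun z => z <= m) (labels t) -> leafm m t.
Proof.
move=> Hn Hl; apply/allP => u uin; apply/implyP => /eqP pu.
have := allP Hn u uin; rewrite proper_l pu => Hp.
have : all (fun b => b <= m) (map beta (pkids u)).
  rewrite all_map; apply/allP => c cin /=.
  apply: leq_trans (beta_le_plabel c) _; apply: (allP Hl); apply: sub_label.
  exact: sub_sub uin _ (kid_sub cin).
move/(properl_max Hp); by case: (pkids u).
Qed.

Lemma leafm_incr m t : increasing_ptree t -> all (fun z => z <= m) (labels t) -> leafm m t.
Proof.
move=> Hn Hl; apply/allP => u uin; apply/implyP => /eqP pu.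
have := allP Hn u uin; rewrite pu.
have Hk : forall c, c \in pkids u -> plabel c <= m.
  move=> c cin; apply: (allP Hl); apply: sub_label; exact: sub_sub uin _ (kid_sub cin).
case: (pkids u) Hk => // c cs Hk /= /andP [H _].
by have := Hk c (mem_head _ _); rewrite leqNgt H.
Qed.

Fixpoint sN (k : nat) : seq ptree :=
  if k is k'.+1 then flatten (map (ins_all k.+1) (sN k')) else [:: leaf 1].

Definition goodP (P : ptree -> bool) :=
  [/\ P (leaf 1),
      (forall v i m t, all (fun z => z < m) (labels t) -> P (ins v i m t) = P t) &
      (forall m t, P t -> all (fun z => z <= m) (labels t) -> leafm m t)].

Lemma pto_uniq n T : plane_tree_on n T -> uniq (labels T).
Proof. by move=> H; rewrite (perm_uniq H) iota_uniq. Qed.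

Lemma pto_mem n T x : plane_tree_on n T -> (x \in labels T) = (0 < x <= n).
Proof. by move=> H; rewrite (perm_mem H) mem_iota; lia. Qed.

Lemma pto_lt n T : plane_tree_on n T -> all (fun z => z < n.+1) (labels T).
Proof. move=> H; apply/allP => z; rewrite (pto_mem _ H); lia. Qed.

Lemma labels_nonempty t : 0 < size (labels t).
Proof. by case: t. Qed.

Lemma perm_iotaS k : perm_eq (iota 1 k.+2) (k.+2 :: iota 1 k.+1).
Proof.
have -> : iota 1 k.+2 = iota 1 (k.+1 + 1) by rewrite addn1.
apply/permP => p; rewrite iotaD count_cat add1n; simpl; lia.
Qed.

Lemma sN_mem P : goodP P -> forall k T, (T \in sN k) = plane_tree_on k.+1 T && P T.
Proof.
case=> HP1 HPins HPleaf; elim=> [|k IH] T.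
  rewrite /= inE; apply/idP/idP => [/eqP -> | /andP [Hp _]].
    by rewrite /plane_tree_on /= HP1.
  have Hs := perm_size Hp; rewrite size_iota in Hs.
  case: T Hp Hs => a [|c cs] /= Hp Hs.
    by have := perm_mem Hp a; rewrite !inE eqxx /= => /esym /eqP ->.
  move: Hs; rewrite size_cat; have := labels_nonempty c; lia.
set m := k.+2.
apply/idP/idP.
- move/flatten_mapP => [T0 T0in /mapP [[v i] pin ->]] /=.
  move: T0in; rewrite IH => /andP [Hp0 HP0].
  have Hu0 := pto_uniq Hp0; have Hl0 := pto_lt Hp0.
  have vin := valid_label (slots_valid pin); simpl in vin.
  rewrite HPins // HP0 andbT /plane_tree_on.
  have HS : perm_eq (k.+2 :: iota 1 k.+1) (iota 1 k.+2) by rewrite perm_sym perm_iotaS.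
  apply: (perm_trans _ HS).
  apply/permP => p; rewrite count_labels_ins (count_uniq_mem _ Hu0) vin /=.
  by rewrite (permP Hp0) addnC muln1.
- move=> /andP [Hp HP].
  have Hu := pto_uniq Hp.
  have Hle : all (fun z => z <= m) (labels T).
    by apply/allP => z; rewrite (pto_mem _ Hp); lia.
  have Hlf := HPleaf m T HP Hle.
  have mT : m \in labels T by rewrite (pto_mem _ Hp); lia.
  have Hroot : plabel T != m.
    apply/negP => /eqP E.
    have := allP Hlf T (sub_self T); rewrite E eqxx /=.
    case: T Hp E {Hu Hle Hlf mT HP} => a [|//] Hp /= E _.
    by have := perm_size Hp; rewrite size_iota.
  have [[v i] pin ET] := exists_slot Hu mT Hroot Hlf; simpl in ET.
  set T0 := remove m T in pin ET.
  have vin := valid_label (slots_valid pin); simpl in vin.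
  set c := count_mem v (labels T0).
  have Hperm : perm_eq (labels T) (nseq c m ++ labels T0).
    apply/permP => p; rewrite {1}ET count_labels_ins count_cat count_nseq.
    by rewrite addnC.
  have c0 : 0 < c by rewrite /c -has_count; apply/hasP; exists v => //=.
  have := Hu; rewrite (perm_uniq Hperm) cat_uniq => /and3P [Hc Hd Hu0].
  have c1 : c = 1.
    move: Hc c0; case: (c) => // [[|c']] //= /andP [].
    by rewrite inE eqxx.
  have mT0 : m \notin labels T0.
    apply/negP => H; case/negP: Hd; apply/hasP; exists m => //.
    by rewrite c1 mem_head.
  have Hp0 : plane_tree_on k.+1 T0.
    rewrite /plane_tree_on -(perm_cons m).
    apply: perm_trans (perm_trans _ Hp) (perm_iotaS k).
    by rewrite perm_sym c1 in Hperm.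
  apply/flatten_mapP; exists T0.
    rewrite IH Hp0 /=.
    by rewrite ET HPins ?(pto_lt Hp0) in HP.
  by rewrite ET; apply: (map_f (fun p => ins p.1 p.2 m T0) pin).
Qed.

Lemma sN_uniq P : goodP P -> forall k, uniq (sN k).
Proof.
move=> HP; elim=> [|k IH] //=.
apply: uniq_flatten_map => //.
- move=> T0; rewrite (sN_mem HP) => /andP [Hp _].
  apply: uniq_ins_all; first exact: pto_uniq Hp.
  by rewrite (pto_mem _ Hp); lia.
- move=> x y z; rewrite !(sN_mem HP) => /andP [Hx _] /andP [Hy _] zx zy.
  have nx : k.+2 \notin labels x by rewrite (pto_mem _ Hx); lia.
  have ny : k.+2 \notin labels y by rewrite (pto_mem _ Hy); lia.
  by rewrite -(remove_ins_all nx zx) (remove_ins_all ny zy).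
Qed.

Lemma sumn_const (T : Type) (s : seq T) c : sumn (map (fun _ => c) s) = c * size s.
Proof. by elim: s => [|x s IH] /=; rewrite ?muln0 // IH mulnS. Qed.

Lemma gs_deg t : gs deg_node t + 1 = size (subtrees t).
Proof.
elim/ptree_ind': t => a ts IH.
rewrite gs_rec /= size_flatten /shape -map_comp.
rewrite (sumn_eq_in (f := size \o subtrees) (g := fun c => gs deg_node c + 1)); last first.
  by move=> c cin /=; rewrite IH.
rewrite sumnD sumn_const /deg_node /=; lia.
Qed.

Lemma size_slots t : size (slots t) = gs deg_node t + size (subtrees t).
Proof.
rewrite /slots size_flatten /shape -map_comp.
rewrite (sumn_eq_in (g := fun u => deg_node u + 1)); last first.
  by move=> u _ /=; rewrite size_map size_iota addn1.
by rewrite sumnD sumn_const mul1n.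
Qed.

Lemma size_subtrees t : size (subtrees t) = size (labels t).
Proof. by rewrite -labels_sub size_map. Qed.

Lemma size_sN P : goodP P -> forall k, size (sN k.+1) = k.*2.+1 * size (sN k).
Proof.
move=> HP k; rewrite /= size_flatten /shape -map_comp.
rewrite (sumn_eq_in (g := fun _ => k.*2.+1)).
  by rewrite sumn_const mulnC.
move=> T0; rewrite (sN_mem HP) => /andP [Hp _] /=.
rewrite size_map size_slots.
have := gs_deg T0; rewrite size_subtrees (perm_size Hp) size_iota; lia.
Qed.

Lemma inner_sum (R : comNzRingType) (x t : R) Y E (b : nat) d :
  (\sum_(j <- iota 0 d.+1) x ^+ (Y + b * (d <= j)) * t ^+ (E + (j < d))
   = x ^+ Y * t ^+ E * (t *+ d + x ^+ b))%R.
Proof.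
have -> : iota 0 d.+1 = index_iota 0 d.+1 by rewrite /index_iota subn0.
rewrite big_nat_recr //= leqnn ltnn muln1 addn0.
rewrite (eq_big_nat _ _ (F2 := fun _ => x ^+ Y * t ^+ E.+1)%R); last first.
  by move=> j /andP [_ jd]; rewrite leqNgt jd muln0 addn0 addn1.
rewrite sumr_const_nat subn0 exprD exprS.
rewrite mulrDr -!mulrnAr; ring.
Qed.

Lemma sum_pow_lbl (R : comNzRingType) (x : R) (s : seq ptree) :
  (\sum_(u <- s) x ^+ (plabel u == 1) =
   x *+ count (fun u => plabel u == 1) s + (count (fun u => plabel u != 1) s)%:R)%R.
Proof.
elim: s => [|u s IH]; first by rewrite big_nil addr0.
rewrite big_cons IH /=; case: (plabel u == 1) => /=; rewrite ?expr1 ?expr0 ?add0n ?add1n.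
  by rewrite mulrS addrA.
by rewrite mulrS addrCA.
Qed.

Lemma weight_ins_all (R : comNzRingType) (x t : R) m T0 :
  uniq (labels T0) -> all (fun z => z < m) (labels T0) -> 1 \in labels T0 ->
  (\sum_(T <- ins_all m T0) x ^+ young_at 1 T * t ^+ eld T
   = x ^+ young_at 1 T0 * t ^+ eld T0 *
     (x + (size (labels T0)).-1%:R + (size (labels T0)).-1%:R * t))%R.
Proof.
move=> Hu Hm H1.
rewrite /ins_all big_map /slots big_flatten big_map.
rewrite (eq_big_seq (fun u => x ^+ young_at 1 T0 * t ^+ eld T0 *
    (t *+ deg_node u + x ^+ (plabel u == 1)))%R); last first.
  move=> u uin; rewrite big_map.
  rewrite (eq_bigr (fun j => x ^+ (young_at 1 T0 + (plabel u == 1) * (deg_node u <= j)) *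
       t ^+ (eld T0 + (j < deg_node u)))%R); last first.
    move=> j _ /=; rewrite young_ins // eld_ins //.
    rewrite (gs_single (fun u' => (plabel u' == 1) * (deg_node u' <= j)) Hu uin).
    by rewrite (gs_single (fun u' => nat_of_bool (j < deg_node u')) Hu uin).
  exact: inner_sum.
rewrite -mulr_sumr big_split /= sumrMnr sum_pow_lbl.
have -> : (\sum_(u <- subtrees T0) deg_node u)%N = gs deg_node T0 by rewrite /gs sumnE big_map.
have c1 : count (fun u => plabel u == 1) (subtrees T0) = 1.
  by rewrite -(count_map plabel (pred1 1)) labels_sub (count_uniq_mem _ Hu) H1.
have c2 : count (fun u => plabel u != 1) (subtrees T0) = (size (labels T0)).-1.
  have E := count_predC (fun u => plabel u == 1) (subtrees T0).
  by rewrite c1 size_subtrees in E; rewrite -E add1n.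
have c3 : gs deg_node T0 = (size (labels T0)).-1.
  have := gs_deg T0; rewrite size_subtrees; lia.
rewrite c2 c3 c1 -mulr_natr; ring.
Qed.

Lemma good_noimp : goodP no_improper.
Proof.
split => //.
- by move=> v i m t H; apply: noimp_ins.
- by move=> m t; apply: leafm_noimp.
Qed.

Lemma good_incr : goodP increasing_ptree.
Proof.
split => //.
- by move=> v i m t H; apply: incr_ins.
- by move=> m t; apply: leafm_incr.
Qed.

Lemma sN_sum (R : comNzRingType) (x t : R) k :
  (\sum_(T <- sN k) x ^+ young_at 1 T * t ^+ eld T
   = \prod_(0 <= j < k) (x + j%:R + j%:R * t))%R.
Proof.
elim: k => [|k IH].
  by rewrite /= big_seq1 big_geq // expr0 mulr1.
rewrite /= big_flatten /= big_map.
rewrite (eq_big_seq (fun T0 => x ^+ young_at 1 T0 * t ^+ eld T0 * (x + k%:R + k%:R * t))%R).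
  by rewrite -mulr_suml IH big_nat_recr.
move=> T0; rewrite (sN_mem good_noimp) => /andP [Hp _].
rewrite weight_ins_all.
- by rewrite (perm_size Hp) size_iota.
- exact: pto_uniq Hp.
- exact: pto_lt Hp.
- by rewrite (pto_mem _ Hp).
Qed.

Definition Fr (n : nat) (i : 'I_n) : pred (option 'I_n) :=
  fun o => if o is Some j then (j < i)%N else (val i == 0)%N.

Lemma iter_none n (p : {ffun 'I_n -> option 'I_n}) k :
  iter k (fun o => obind p o) None = None.
Proof. by elim: k => //= k ->. Qed.

Lemma iter_reach n (p : {ffun 'I_n -> option 'I_n}) :
  (forall i, p i \in Fr i) -> forall k (i : 'I_n), (i < k)%N ->
  iter k (fun o => obind p o) (Some i) = None.
Proof.
move=> HF; elim=> // k IH i ik; rewrite iterSr /=.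
have := HF i; rewrite /Fr /in_mem /=.
case: (p i) => [j|] /=; last by rewrite iter_none.
move=> ji; apply: IH; lia.
Qed.

Lemma rooted_family n (n0 : (0 < n)%N) (p : {ffun 'I_n -> option 'I_n}) :
  (rooted_tree p && increasing_rtree p) = [forall i, p i \in Fr i].
Proof.
apply/idP/idP.
- move=> /andP [/andP [Hc _] /forallP Hi]; apply/forallP => i.
  set i0 : 'I_n := Ordinal n0.
  have p0 : p i0 = None.
    by have := Hi i0; case: (p i0) => // j; rewrite ltn0.
  have := Hi i; rewrite /Fr /in_mem /=.
  case E: (p i) => [j|] //= _.
  move: Hc => /cards1P [x Hx].
  have : i \in [set i | p i == None] by rewrite inE E.
  have : i0 \in [set i | p i == None] by rewrite inE p0.
  by rewrite Hx !inE => /eqP E0 /eqP E1; rewrite E1 -E0.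
- move=> /forallP HF.
  have HF' : forall i, p i \in Fr i by [].
  apply/andP; split; last first.
    apply/forallP => i; have := HF i; rewrite /Fr /in_mem /=.
    by case: (p i).
  apply/andP; split.
    set i0 : 'I_n := Ordinal n0.
    apply/cards1P; exists i0; apply/setP => i; rewrite !inE.
    have := HF i; rewrite /Fr /in_mem /=.
    case: (p i) => [j|] /=.
      move=> ji; apply/esym/negbTE/eqP => E; subst i; move: ji; by rewrite ltn0.
    by move=> /eqP E; apply/esym/eqP/val_inj.
  apply/forallP => i; apply/existsP.
  have ilt : (i.+1 < n.+1)%N by rewrite ltnS.
  exists (Ordinal ilt); apply/eqP; apply: iter_reach => //=.
Qed.

Lemma card_lt n (i : 'I_n) : #|[set j : 'I_n | (j < i)%N]| = i.
Proof.
have le : (i <= n)%N by apply: ltnW.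
have -> : [set j : 'I_n | (j < i)%N] = [set widen_ord le k | k : 'I_i].
  apply/setP => j; rewrite inE; apply/idP/imsetP => [ji | [k _ ->]] /=.
    by exists (Ordinal ji) => //; apply: val_inj.
  exact: ltn_ord.
rewrite card_imset ?card_ord //.
by move=> k1 k2 /(congr1 val) /= E; apply: val_inj.
Qed.

Lemma card_Fr n (i : 'I_n) : #|Fr i| = maxn 1 i.
Proof.
case: (posnP i) => [i0 | ip].
  rewrite (@eq_card _ _ (pred1 None)) ?card1 ?i0 //.
  by case=> [j|]; rewrite /Fr /in_mem /= ?i0 ?ltn0.
rewrite (@eq_card _ _ [set Some j | j in [set j : 'I_n | (j < i)%N]]).
  rewrite card_imset ?card_lt; last exact: Some_inj.
  lia.
case=> [j|].
  rewrite -[Some j \in Fr i]/(j < i)%N (mem_imset _ _ Some_inj) inE //.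
rewrite -[None \in Fr i]/(i == 0 :> nat).
have -> : (i == 0 :> nat) = false by lia.
by apply/esym/imsetP => [[j _]].
Qed.

Lemma prod_maxn k : \prod_(i < k.+1) maxn 1 i = k`!.
Proof.
elim: k => [|k IH]; first by rewrite big_ord_recr big_ord0.
rewrite big_ord_recr /= IH factS mulnC; congr (_ * _); lia.
Qed.

Lemma card_rooted n (n0 : (0 < n)%N) :
  #|[set p : {ffun 'I_n -> option 'I_n} | rooted_tree p && increasing_rtree p]| = (n.-1)`!.
Proof.
have -> : [set p : {ffun 'I_n -> option 'I_n} | rooted_tree p && increasing_rtree p]
   = [set p in family (@Fr n)].
  by apply/setP => p; rewrite !inE rooted_family.
rewrite cardsE card_family foldrE big_map big_enum /=.
rewrite (eq_bigr (fun i : 'I_n => maxn 1 i)); last by move=> i _; rewrite card_Fr.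
by case: n n0 => // n _; rewrite prod_maxn.
Qed.

Lemma size_sN_dfact P : goodP P -> forall k, size (sN k) = dfact (2 * k.+1 - 3).
Proof.
move=> HP; elim=> [|k IH] //.
rewrite (size_sN HP) IH.
case: k {IH} => [|k] //.
have -> : 2 * k.+3 - 3 = (2 * k.+2 - 3).+2 by lia.
rewrite [dfact _.+2]/=; congr (_ * _); lia.
Qed.

Theorem proposition2p4 (n : nat) (hn : (1 <= n)%N) :
  (exists s : seq ptree,
      uniq s
      /\ (forall T : ptree, (T \in s) = plane_tree_on n T && no_improper T)
      /\ (forall (R : comNzRingType) (x t : R),
            (\sum_(T <- s) x ^+ young_at 1 T * t ^+ eld T
             = \prod_(0 <= k < n.-1) (x + k%:R + k%:R * t))%R))
  /\ #|[set p : {ffun 'I_n -> option 'I_n} | rooted_tree p && increasing_rtree p]|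
       = (n.-1)`!
  /\ (exists s : seq ptree,
      uniq s
      /\ (forall T : ptree, (T \in s) = plane_tree_on n T && increasing_ptree T)
      /\ size s = dfact (2 * n - 3)).
Proof.
have En : n.-1.+1 = n by rewrite prednK.
split; [|split].
- exists (sN n.-1); split; first exact: (sN_uniq good_noimp).
  split; first by move=> T; rewrite (sN_mem good_noimp) En.
  by move=> R x t; rewrite sN_sum.
- exact: card_rooted.
- exists (sN n.-1); split; first exact: (sN_uniq good_incr).
  split; first by move=> T; rewrite (sN_mem good_incr) En.
  by rewrite (size_sN_dfact good_incr) En.
Qed.
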